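(* Let $z_0\in\mathbb{B}^2$, $t>0$ and $r=e^t$. Then the Hilbert circle $\partial B_h(z_0,t)=\{z\in\mathbb{B}^2: h_{\mathbb{B}^2}(z_0,z)=t\}$ is exactly the set of $z\in\mathbb{C}$ satisfying $$\overline{z_0}^2rz^2-\big((r^2+1)|z_0|^2-(r+1)^2\big)z\overline{z}+z_0^2r\overline{z}^2-4\overline{z_0}rz-4z_0r\overline{z}+(r+1)^2|z_0|^2-(r-1)^2=0,$$ and this set is a Euclidean ellipse contained in $\mathbb{B}^2$.
   Context: $\mathbb{B}^2$ is the open unit disk in $\mathbb{C}$. For distinct $x,y\in\mathbb{B}^2$ the Hilbert metric is $h_{\mathbb{B}^2}(x,y)=\log\frac{|u-y||x-v|}{|u-x||y-v|}$, where $u,v$ are the intersection points of the line through $x,y$ with the unit circle, labelled so that $|u-x|<|u-y|$; also $h_{\mathbb{B}^2}(x,x)=0$. $B_h(z_0,t)=\{z\in\mathbb{B}^2:h_{\mathbb{B}^2}(z_0,z)<t\}$. *)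

(* Defs.v *)
From Stdlib Require Import Reals ClassicalEpsilon.
From Coquelicot Require Import Coquelicot.
Open Scope R_scope.

Definition hilbert_ends (x y u v : C) : Prop :=
  Cmod u = 1 /\ Cmod v = 1 /\ u <> v /\
  (exists a : R, u = Cplus x (Cmult (RtoC a) (Cminus y x))) /\
  (exists b : R, v = Cplus x (Cmult (RtoC b) (Cminus y x))) /\
  Cmod (Cminus u x) < Cmod (Cminus u y).

Definition hilbert (x y : C) : R :=
  if excluded_middle_informative (x = y) then 0
  else let p := epsilon (inhabits (RtoC 0, RtoC 0))
                        (fun p : C * C => hilbert_ends x y (fst p) (snd p)) in
       let u := fst p in let v := snd p in
       ln ((Cmod (Cminus u y) * Cmod (Cminus x v)) /
           (Cmod (Cminus u x) * Cmod (Cminus y v))).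

Definition circle_eq (z0 : C) (r : R) (z : C) : C :=
  let z0c := Cconj z0 in let zc := Cconj z in
  let m2 := Cmod z0 ^ 2 in
  Cplus (Cplus (Cplus (Cplus (Cplus (Cplus
    (Cmult (Cmult (Cmult z0c z0c) (RtoC r)) (Cmult z z))
    (Copp (Cmult (RtoC ((r ^ 2 + 1) * m2 - (r + 1) ^ 2)) (Cmult z zc))))
    (Cmult (Cmult (Cmult z0 z0) (RtoC r)) (Cmult zc zc)))
    (Copp (Cmult (Cmult (RtoC 4) (Cmult z0c (RtoC r))) z)))
    (Copp (Cmult (Cmult (RtoC 4) (Cmult z0 (RtoC r))) zc)))
    (RtoC ((r + 1) ^ 2 * m2)))
    (Copp (RtoC ((r - 1) ^ 2))).

(* A (non-degenerate) Euclidean ellipse: foci f1 f2 and constant 2a > |f1 - f2|;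
   circles are the case f1 = f2. *)
Definition is_ellipse (S : C -> Prop) : Prop :=
  exists (f1 f2 : C) (a : R), Cmod (Cminus f1 f2) < 2 * a /\
    forall z, S z <-> Cmod (Cminus z f1) + Cmod (Cminus z f2) = 2 * a.

(* Main.v *)
Require Import Defs.
From Stdlib Require Import Reals Lra Psatz ClassicalEpsilon.
From Coquelicot Require Import Coquelicot.
Open Scope R_scope.
Lemma Cmod2 (p q : R) : Cmod (p,q) ^ 2 = p^2 + q^2.
Proof. unfold Cmod. rewrite pow2_sqrt; simpl; [ring| nra]. Qed.

Lemma Cmod_lt1 (p q : R) : Cmod (p,q) < 1 <-> p^2 + q^2 < 1.
Proof.
  rewrite <- Cmod2. pose proof (Cmod_ge_0 (p,q)). split; intro; nra.
Qed.

Lemma CmodS s dx dy X Y : X = s*dx -> Y = s*dy -> Cmod (X,Y) = Rabs s * sqrt (dx^2+dy^2).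
Proof.
  intros -> ->. unfold Cmod; cbn [fst snd].
  replace ((s*dx)^2 + (s*dy)^2) with (s^2 * (dx^2+dy^2)) by ring.
  rewrite sqrt_mult_alt by nra. rewrite <- sqrt_Rsqr_abs. unfold Rsqr. f_equal. f_equal. ring.
Qed.

Lemma pt_eq p q c e a u1 u2 :
  (u1,u2) = Cplus (p,q) (Cmult (RtoC a) (Cminus (c,e) (p,q))) ->
  u1 = p + a*(c-p) /\ u2 = q + a*(e-q).
Proof.
  unfold Cplus, Cmult, Cminus, Copp, RtoC; simpl. intro H; injection H; intros; split; subst; ring.
Qed.

Lemma decode p q c e u v :
  (p,q) <> (c,e) -> p^2+q^2 < 1 -> c^2+e^2 < 1 ->
  hilbert_ends (p,q) (c,e) u v ->
  let D := (c-p)^2+(e-q)^2 in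
  exists a b, a < 0 /\ 1 < b /\ D*(a+b) = -2*(p*(c-p)+q*(e-q)) /\ D*(a*b) = p^2+q^2-1 /\
   Cmod (Cminus u (c,e)) = (1-a)*sqrt D /\ Cmod (Cminus (p,q) v) = b * sqrt D /\
   Cmod (Cminus u (p,q)) = -a*sqrt D /\ Cmod (Cminus (c,e) v) = (b-1)*sqrt D.
Proof.
  intros Hne Hx Hy [Hu [Hv [Huv [[a Ha] [[b Hb] Hlab]]]]] D.
  destruct u as [u1 u2]; destruct v as [v1 v2].
  apply pt_eq in Ha; apply pt_eq in Hb. destruct Ha as [-> ->]; destruct Hb as [-> ->].
  assert (HD : 0 < D).
  { unfold D. destruct (Req_dec c p) as [->|]; [destruct (Req_dec e q) as [->|]|].
    - exfalso; now apply Hne. - assert (e - q < 0 \/ e - q > 0) as [|] by lra; nra. - pose proof (pow2_ge_0 (e-q)). assert (c - p < 0 \/ c - p > 0) as [|] by lra; nra. }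
  assert (Eu : forall s, Cmod (Cminus (p + s*(c-p), q + s*(e-q)) (c,e)) = Rabs (s-1) * sqrt D).
  { intro s. unfold Cminus, Cplus, Copp, D; cbn [fst snd]. apply CmodS; ring. }
  assert (Ex : forall s, Cmod (Cminus (p + s*(c-p), q + s*(e-q)) (p,q)) = Rabs s * sqrt D).
  { intro s. unfold Cminus, Cplus, Copp, D; cbn [fst snd]. apply CmodS; ring. }
  assert (Ex' : forall s, Cmod (Cminus (p,q) (p + s*(c-p), q + s*(e-q))) = Rabs s * sqrt D).
  { intro s. unfold Cminus, Cplus, Copp, D; cbn [fst snd]. rewrite <- (Rabs_Ropp s). apply CmodS; ring. }
  assert (Ey' : forall s, Cmod (Cminus (c,e) (p + s*(c-p), q + s*(e-q))) = Rabs (s-1) * sqrt D).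
  { intro s. unfold Cminus, Cplus, Copp, D; cbn [fst snd]. rewrite <- (Rabs_Ropp (s-1)). apply CmodS; ring. }
  rewrite Eu, Ex in Hlab.
  assert (HsD : 0 < sqrt D) by (apply sqrt_lt_R0; lra).
  assert (Hlab' : Rabs a < Rabs (a-1)) by (apply (Rmult_lt_reg_r (sqrt D)); lra).
  assert (Ha2 : a < 1/2).
  { destruct (Rlt_le_dec a (1/2)); auto. exfalso.
    rewrite (Rabs_right a), (Rabs_right (a-1)) in Hlab'; try lra.
    destruct (Rle_lt_dec 1 a); [rewrite Rabs_right in Hlab'; lra| rewrite Rabs_left in Hlab'; lra]. }
  apply (f_equal (fun z => z^2)) in Hu. apply (f_equal (fun z => z^2)) in Hv.
  rewrite Cmod2 in Hu, Hv.
  assert (Hab : a <> b).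
  { intro; subst b. apply Huv; reflexivity. }
  set (k := p*(c-p)+q*(e-q)) in *.
  assert (Fa : D*a^2 + 2*k*a + (p^2+q^2-1) = 0) by (unfold D, k; nra).
  assert (Fb : D*b^2 + 2*k*b + (p^2+q^2-1) = 0) by (unfold D, k; nra).
  assert (S : D*(a+b) = -2*k).
  { apply (Rmult_eq_reg_r (a-b)); [|lra]. nra. }
  assert (P : D*(a*b) = p^2+q^2-1) by nra.
  assert (Q : D*((1-a)*(1-b)) = c^2+e^2-1) by (unfold D, k in *; nra).
  assert (Hb1 : 1 < b).
  { destruct (Rlt_le_dec 1 b); auto. exfalso.
    assert (0 <= (1-a)*(1-b)) by (apply Rmult_le_pos; lra). nra. }
  assert (Hab0 : a*b < 0).
  { destruct (Rlt_le_dec (a*b) 0); auto. exfalso. assert (0 <= D*(a*b)) by (apply Rmult_le_pos; lra). lra. }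
  assert (Ha0 : a < 0).
  { destruct (Rlt_le_dec a 0); auto. exfalso. assert (0 <= a*b) by (apply Rmult_le_pos; lra). lra. }
  exists a, b. repeat split; try assumption.
  - rewrite Eu, Rabs_left by lra. ring.
  - rewrite Ex', Rabs_right by lra. ring.
  - rewrite Ex, Rabs_left by lra. ring.
  - rewrite Ey', Rabs_right by lra. ring.
Qed.


Lemma Cmod_pt p q c e s : Cmod (Cplus (p,q) (Cmult (RtoC s) (Cminus (c,e) (p,q)))) =
  sqrt ((p + s*(c-p))^2 + (q + s*(e-q))^2).
Proof.
  unfold Cmod, Cminus, Cplus, Cmult, Copp, RtoC; cbn [fst snd]. apply f_equal. ring.
Qed.

Lemma ends_exist p q c e :
  (p,q) <> (c,e) -> p^2+q^2 < 1 -> c^2+e^2 < 1 ->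
  exists uv : C*C, hilbert_ends (p,q) (c,e) (fst uv) (snd uv).
Proof.
  intros Hne Hx Hy.
  set (D := (c-p)^2+(e-q)^2). set (k := p*(c-p)+q*(e-q)). set (c0 := p^2+q^2-1).
  assert (HD : 0 < D).
  { unfold D. destruct (Req_dec c p) as [->|]; [destruct (Req_dec e q) as [->|]|].
    - exfalso; now apply Hne. - assert (e - q < 0 \/ e - q > 0) as [|] by lra; nra.
    - pose proof (pow2_ge_0 (e-q)). assert (c - p < 0 \/ c - p > 0) as [|] by lra; nra. }
  set (Dl := k^2 - D*c0).
  assert (HDl : k^2 < Dl) by (unfold Dl, c0; nra).
  assert (Hs : 0 < sqrt Dl) by (apply sqrt_lt_R0; nra).
  assert (Hs2 : sqrt Dl ^2 = Dl) by (apply pow2_sqrt; nra).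
  assert (Hsk : Rabs k < sqrt Dl).
  { rewrite <- sqrt_Rsqr_abs. apply sqrt_lt_1_alt. unfold Rsqr. split; nra. }
  set (a := (-k - sqrt Dl)/D). set (b := (-k + sqrt Dl)/D).
  assert (Ha : D*a^2 + 2*k*a + c0 = 0).
  { replace (D*a^2 + 2*k*a + c0) with ((sqrt Dl^2 - (k^2 - D*c0))/D) by (unfold a; field; lra).
    rewrite Hs2; unfold Dl; field; lra. }
  assert (Hb : D*b^2 + 2*k*b + c0 = 0).
  { replace (D*b^2 + 2*k*b + c0) with ((sqrt Dl^2 - (k^2 - D*c0))/D) by (unfold b; field; lra).
    rewrite Hs2; unfold Dl; field; lra. }
  assert (Ha0 : a < 0).
  { unfold a. apply Rmult_lt_reg_r with D; auto. field_simplify; [|lra].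
    pose proof (Rle_abs (-k)); rewrite Rabs_Ropp in *; lra. }
  assert (Hab : a < b) by (unfold a, b; apply Rmult_lt_compat_r; [apply Rinv_0_lt_compat|]; lra).
  exists (Cplus (p,q) (Cmult (RtoC a) (Cminus (c,e) (p,q))), Cplus (p,q) (Cmult (RtoC b) (Cminus (c,e) (p,q)))).
  cbn [fst snd]. unfold hilbert_ends. repeat split.
  - rewrite Cmod_pt. rewrite <- sqrt_1. f_equal. unfold D, k, c0 in *. nra.
  - rewrite Cmod_pt. rewrite <- sqrt_1. f_equal. unfold D, k, c0 in *. nra.
  - intro H. unfold Cminus, Cplus, Cmult, Copp, RtoC in H; cbn [fst snd] in H.
    injection H; intros. assert ((a-b)^2 * D = 0) by (unfold D; nra). 
    assert (0 < (a-b)^2 * D) by (apply Rmult_lt_0_compat; nra). lra.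
  - exists a; reflexivity.
  - exists b; reflexivity.
  - assert (E1 : Cmod (Cminus (Cplus (p,q) (Cmult (RtoC a) (Cminus (c,e) (p,q)))) (p,q)) = Rabs a * sqrt D).
    { unfold Cminus, Cplus, Cmult, Copp, RtoC, D; cbn [fst snd]. apply CmodS; ring. }
    assert (E2 : Cmod (Cminus (Cplus (p,q) (Cmult (RtoC a) (Cminus (c,e) (p,q)))) (c,e)) = Rabs (a-1) * sqrt D).
    { unfold Cminus, Cplus, Cmult, Copp, RtoC, D; cbn [fst snd]. apply CmodS; ring. }
    rewrite E1, E2. rewrite !Rabs_left by lra.
    assert (0 < sqrt D) by (apply sqrt_lt_R0; lra). nra.
Qed.

Lemma hilbert_val p q c e :
  (p,q) <> (c,e) -> p^2+q^2 < 1 -> c^2+e^2 < 1 ->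
  let D := (c-p)^2+(e-q)^2 in
  exists a b, a < 0 /\ 1 < b /\ D*(a+b) = -2*(p*(c-p)+q*(e-q)) /\ D*(a*b) = p^2+q^2-1 /\
   hilbert (p,q) (c,e) = ln (((1-a)*b)/((-a)*(b-1))).
Proof.
  intros Hne Hx Hy D.
  pose proof (epsilon_spec (inhabits (RtoC 0, RtoC 0))
     (fun p0 : C*C => hilbert_ends (p,q) (c,e) (fst p0) (snd p0)) (ends_exist p q c e Hne Hx Hy)) as HP.
  cbv beta in HP.
  unfold hilbert; destruct (excluded_middle_informative ((p,q) = (c,e))) as [E|_]; [contradiction|].
  destruct (decode p q c e _ _ Hne Hx Hy HP) as [a [b [Ha [Hb [S [P [E1 [E2 [E3 E4]]]]]]]]].
  exists a, b. repeat split; try assumption.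
  cbv zeta. rewrite E1, E2, E3, E4. f_equal.
  assert (HD : 0 < D).
  { unfold D. destruct (Req_dec c p) as [->|]; [destruct (Req_dec e q) as [->|]|].
    - exfalso; now apply Hne. - assert (e - q < 0 \/ e - q > 0) as [|] by lra; nra.
    - pose proof (pow2_ge_0 (e-q)). assert (c - p < 0 \/ c - p > 0) as [|] by lra; nra. }
  assert (0 < sqrt D) by (apply sqrt_lt_R0; lra).
  fold D. case excluded_middle_informative; [intro; contradiction|intros _]. f_equal. field. split; [lra|]. split; lra.
Qed.

Definition Kl (r p q x y : R) :=
  4*r*(1 - (p*x+q*y))^2 - (r+1)^2*(1-(p^2+q^2))*(1-(x^2+y^2)).

Lemma hilbert_iff p q c e t :
  p^2+q^2 < 1 -> c^2+e^2 < 1 -> 0 < t ->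
  (hilbert (p,q) (c,e) = t <-> Kl (exp t) p q c e = 0).
Proof.
  intros Hx Hy Ht.
  set (r := exp t).
  assert (Hr : 1 < r) by (unfold r; rewrite <- exp_0; apply exp_increasing; lra).
  destruct (excluded_middle_informative ((p,q) = (c,e))) as [E|Hne].
  - injection E; intros -> ->. unfold hilbert.
    case excluded_middle_informative; [intros _|intro n; now elim n].
    split; intro H; [lra|]. exfalso.
    assert (H2 : Kl r c e c e = - ((r-1)*(1-(c^2+e^2)))^2) by (unfold Kl; ring).
    rewrite H in H2.
    assert (0 < ((r-1)*(1-(c^2+e^2)))^2).
    { apply pow_lt. apply Rmult_lt_0_compat; lra. }
    lra.
  - destruct (hilbert_val p q c e Hne Hx Hy) as [a [b [Ha [Hb [S [P Eh]]]]]].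
    rewrite Eh. clear Eh.
    set (D := (c-p)^2+(e-q)^2) in *.
    set (N := (1-a)*b). set (M := (-a)*(b-1)).
    assert (HN : 0 < N) by (unfold N; apply Rmult_lt_0_compat; lra).
    assert (HM : 0 < M) by (unfold M; apply Rmult_lt_0_compat; lra).
    assert (HD : 0 < D).
    { unfold D. destruct (Req_dec c p) as [->|]; [destruct (Req_dec e q) as [->|]|].
      - exfalso; now apply Hne. - assert (e - q < 0 \/ e - q > 0) as [|] by lra; nra.
      - pose proof (pow2_ge_0 (e-q)). assert (c - p < 0 \/ c - p > 0) as [|] by lra; nra. }
    assert (HX : 1 - (p*c+q*e) = D*(N+M)/2) by (unfold N, M, D in *; nra).
    assert (HY : 1 - (p^2+q^2) = -(D*(a*b))) by lra.
    assert (HZ : 1 - (c^2+e^2) = -(D*((1-a)*(1-b)))) by (unfold D in *; nra).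
    assert (Key : Kl r p q c e * (N+M)^2 = 4*(1 - (p*c+q*e))^2*((r*N - M)*(N - r*M))).
    { unfold Kl. rewrite HX, HY, HZ. unfold N, M. field. }
    assert (HNM : M < N) by (unfold N, M; nra).
    assert (Hpos : 0 < 4*(1 - (p*c+q*e))^2*(r*N - M)).
    { rewrite HX. apply Rmult_lt_0_compat; [|nra]. apply Rmult_lt_0_compat; [lra|]. 
      apply pow_lt. apply Rmult_lt_0_compat; [|lra]. apply Rmult_lt_0_compat; lra. }
    assert (HNM2 : 0 < (N+M)^2) by (apply pow_lt; lra).
    split; intro H.
    + assert (N/M = r).
      { unfold r. rewrite <- H. rewrite exp_ln; [reflexivity|]. apply Rdiv_lt_0_compat; lra. }
      assert (N = r*M) by (rewrite <- H0; field; lra).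
      apply (Rmult_eq_reg_r ((N+M)^2)); [|lra]. rewrite Key. rewrite H1. ring.
    + assert (E1 : 4*(1 - (p*c+q*e))^2*((r*N - M)*(N - r*M)) = 0) by (rewrite <- Key, H; ring).
      assert (E0 : (4*(1 - (p*c+q*e))^2*(r*N - M)) * (N - r*M) = 0) by (rewrite <- E1; ring).
      apply Rmult_integral in E0. destruct E0 as [E0|E0]; [lra|].
      assert (EN : N = r*M) by lra.
      replace (N/M) with r by (rewrite EN; field; lra).
      unfold r. apply ln_exp.
Qed.


Lemma Kl_in p q x y r : p^2+q^2 < 1 -> 1 < r -> Kl r p q x y = 0 -> x^2+y^2 < 1.
Proof.
  intros Hm Hr HK. unfold Kl in HK.
  destruct (Rlt_le_dec (x^2+y^2) 1) as [|Hn]; auto. exfalso.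
  assert (HB : 0 < (r+1)^2*(1-(p^2+q^2))) by (apply Rmult_lt_0_compat; [apply pow_lt|]; lra).
  assert (H1 : (r+1)^2*(1-(p^2+q^2))*(1-(x^2+y^2)) <= 0).
  { rewrite <- (Rmult_0_r ((r+1)^2*(1-(p^2+q^2)))). apply Rmult_le_compat_l; lra. }
  assert (H2 : 0 <= 4*r*(1 - (p*x+q*y))^2) by (apply Rmult_le_pos; [lra|apply pow2_ge_0]).
  assert (H3 : (r+1)^2*(1-(p^2+q^2))*(1-(x^2+y^2)) = 0) by lra.
  assert (Hn1 : x^2+y^2 = 1).
  { apply Rmult_integral in H3; destruct H3; lra. }
  assert (H4 : (1 - (p*x+q*y))^2 = 0).
  { assert (4*r*(1 - (p*x+q*y))^2 = 0) by lra. apply Rmult_integral in H; destruct H; lra. }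
  assert (H5 : p*x+q*y = 1) by (assert ((1 - (p*x+q*y))*(1 - (p*x+q*y)) = 0) by (rewrite <- H4; ring); apply Rmult_integral in H; destruct H; lra).
  assert (CS : (p*x+q*y)^2 <= (p^2+q^2)*(x^2+y^2)) by (pose proof (pow2_ge_0 (p*y-q*x)); replace ((p^2+q^2)*(x^2+y^2)) with ((p*x+q*y)^2 + (p*y-q*x)^2) by ring; lra).
  rewrite H5, Hn1 in CS. lra.
Qed.

Lemma sqrt_sum P1 P2 a : 0 <= P1 -> 0 <= P2 -> 0 < a ->
  (sqrt P1 + sqrt P2 = 2*a <-> (P1 = (a + (P1-P2)/(4*a))^2 /\ ((P1-P2)/(4*a))^2 <= a^2)).
Proof.
  intros H1 H2 Ha. set (e := (P1-P2)/(4*a)).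
  pose proof (sqrt_pos P1). pose proof (sqrt_pos P2).
  pose proof (pow2_sqrt P1 H1). pose proof (pow2_sqrt P2 H2).
  split.
  - intro S.
    assert (Ee : e = (sqrt P1 - sqrt P2)/2).
    { assert (Ed : P1 - P2 = (sqrt P1 - sqrt P2)*(sqrt P1 + sqrt P2)).
      { rewrite <- H3 at 1. rewrite <- H4 at 1. ring. }
      unfold e. rewrite Ed, S. field. lra. }
    split.
    + rewrite Ee. rewrite <- H3 at 1. apply f_equal2; [|reflexivity]. lra.
    + rewrite Ee. replace a with ((sqrt P1 + sqrt P2)/2) by lra. nra.
  - intros [E1 E2].
    assert (Hp : 0 <= a + e) by nra. assert (Hm : 0 <= a - e) by nra.
    assert (E3 : P2 = (a-e)^2).
    { assert (P2 = P1 - 4*a*e) by (unfold e; field; lra). rewrite H5, E1. ring. }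
    rewrite E1 at 1. rewrite E3. rewrite !sqrt_pow2 by lra. ring.
Qed.

Lemma ellipse_main p q r : p^2+q^2 < 1 -> 1 < r ->
  is_ellipse (fun z => Kl r p q (fst z) (snd z) = 0).
Proof.
  intros Hm Hr.
  set (m := p^2+q^2). set (B := (r+1)^2*(1-m)). set (A := 4*r*m + B).
  assert (Hm0 : 0 <= m) by (unfold m; nra).
  assert (HB : 0 < B) by (unfold B; apply Rmult_lt_0_compat; [apply pow_lt|]; unfold m; lra).
  assert (HA : 0 < A) by (unfold A; nra).
  set (al := 4*r/A). set (lam := 2*(r-1)*sqrt(r*(1-m))/A). set (a := (r-1)*sqrt((1-m)/A)).
  assert (Hlam2 : lam^2 = 4*r*(r-1)^2*(1-m)/A^2).
  { unfold lam. replace ((2*(r-1)*sqrt(r*(1-m))/A)^2) with (4*(r-1)^2*(sqrt(r*(1-m)))^2/A^2) by (field; lra).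
    rewrite pow2_sqrt by (unfold m in *; nra). field; lra. }
  assert (Ha2 : a^2 = (r-1)^2*(1-m)/A).
  { unfold a. replace (((r-1)*sqrt((1-m)/A))^2) with ((r-1)^2*(sqrt((1-m)/A))^2) by ring.
    rewrite pow2_sqrt. field; lra. apply Rdiv_le_0_compat; unfold m in *; lra. }
  assert (Ha : 0 < a).
  { unfold a. apply Rmult_lt_0_compat; [lra|]. apply sqrt_lt_R0. apply Rdiv_lt_0_compat; unfold m in *; lra. }
  assert (Hlm : lam^2*m < a^2).
  { rewrite Hlam2, Ha2. 
    assert (0 < (r-1)^2*(1-m)/A^2) by (apply Rdiv_lt_0_compat; [apply Rmult_lt_0_compat; [apply pow_lt|]; unfold m in *; lra| apply pow_lt; lra]).
    replace ((r-1)^2*(1-m)/A) with ((r-1)^2*(1-m)/A^2 * A) by (field; lra).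
    replace (4*r*(r-1)^2*(1-m)/A^2*m) with ((r-1)^2*(1-m)/A^2 * (4*r*m)) by (field; lra).
    apply Rmult_lt_compat_l; [assumption|]. unfold A. lra. }
  exists (p*al - q*lam, q*al + p*lam), (p*al + q*lam, q*al - p*lam), a.
  split.
  - unfold Cmod, Cminus, Cplus, Copp; cbn [fst snd].
    replace (2*a) with (sqrt ((2*a)^2)) by (rewrite sqrt_pow2; lra).
    apply sqrt_lt_1_alt. split; [nra|].
    replace ((p * al - q * lam + - (p * al + q * lam)) ^ 2 + (q * al + p * lam + - (q * al - p * lam)) ^ 2)
      with (4*(lam^2*m)) by (unfold m; ring). lra.
  - intros [x y]. cbn [fst snd].
    set (P1 := (x - (p*al - q*lam))^2 + (y - (q*al + p*lam))^2).
    set (P2 := (x - (p*al + q*lam))^2 + (y - (q*al - p*lam))^2).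
    replace (Cmod (Cminus (x,y) (p*al - q*lam, q*al + p*lam))) with (sqrt P1)
      by (unfold Cmod, Cminus, Cplus, Copp, P1; cbn [fst snd]; apply f_equal; ring).
    replace (Cmod (Cminus (x,y) (p*al + q*lam, q*al - p*lam))) with (sqrt P2)
      by (unfold Cmod, Cminus, Cplus, Copp, P2; cbn [fst snd]; apply f_equal; ring).
    assert (HP1 : 0 <= P1) by (unfold P1; apply Rplus_le_le_0_compat; apply pow2_ge_0).
    assert (HP2 : 0 <= P2) by (unfold P2; apply Rplus_le_le_0_compat; apply pow2_ge_0).
    rewrite (sqrt_sum P1 P2 a HP1 HP2 Ha).
    set (L := q*x - p*y).
    assert (Ee : (P1-P2)/(4*a) = lam*L/a) by (unfold P1, P2, L; field; lra).
    rewrite Ee.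
    assert (Key : a^2*(P1 - (a + lam*L/a)^2) = (r-1)^2*(1-m)/A^2 * Kl r p q x y).
    { transitivity (a^2*P1 - (a^2 + lam*L)^2); [field; lra|].
      transitivity (a^2*((x-p*al)^2+(y-q*al)^2 + lam^2*m) - (a^2)^2 - lam^2*L^2);
        [unfold P1, L, m; ring|].
      rewrite Hlam2, Ha2. unfold Kl, al, A, B, m. unfold L. field. unfold A, B, m in HA. lra. }
    assert (Bnd : A*m*Kl r p q x y = (A*(p*x+q*y) - 4*r*m)^2 + A*B*L^2 - m*B*(1-m)*(r-1)^2)
      by (unfold Kl, A, B, m, L; ring).
    assert (Hc : 0 < (r-1)^2*(1-m)/A^2) by (apply Rdiv_lt_0_compat; [apply Rmult_lt_0_compat; [apply pow_lt|]; unfold m in *; lra| apply pow_lt; lra]).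
    split.
    + intro HK. split.
      * assert (a^2*(P1 - (a + lam*L/a)^2) = 0) by (rewrite Key, HK; ring).
        apply Rmult_integral in H. destruct H as [H|H]; [nra|lra].
      * rewrite HK in Bnd.
        assert (HL : A*B*L^2 <= m*B*(1-m)*(r-1)^2) by (pose proof (pow2_ge_0 (A*(p*x+q*y) - 4*r*m)); nra).
        assert (HL2 : L^2 <= m*a^2).
        { rewrite Ha2. apply Rmult_le_reg_l with (A*B); [nra|].
          replace (A*B*(m*((r-1)^2*(1-m)/A))) with (m*B*(1-m)*(r-1)^2) by (field; lra). lra. }
        replace ((lam*L/a)^2) with (lam^2*L^2/a^2) by (field; lra).
        apply Rmult_le_reg_r with (a^2); [nra|].
        replace (lam^2*L^2/a^2*a^2) with (lam^2*L^2) by (field; lra).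
        assert (0 <= lam^2) by nra.
        assert (lam^2*L^2 <= lam^2*(m*a^2)) by (apply Rmult_le_compat_l; lra).
        nra.
    + intros [E1 _]. 
      assert (a^2*(P1 - (a + lam*L/a)^2) = 0) by (rewrite <- E1; ring).
      rewrite Key in H. apply Rmult_integral in H. destruct H; [lra|assumption].
Qed.


Lemma circle_eq_Kl r p q x y : circle_eq (p,q) r (x,y) = (Kl r p q x y, 0).
Proof.
  unfold circle_eq. rewrite Cmod2. unfold Kl.
  unfold Cminus, Cplus, Cmult, Copp, Cconj, RtoC; simpl.
  f_equal; ring.
Qed.

Lemma ceq0 k : (k, 0) = RtoC 0 <-> k = 0.
Proof. unfold RtoC. split; intro H; [injection H; auto| now rewrite H]. Qed.

Theorem mainTheorem7 (z0 : C) (t : R) :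
  Cmod z0 < 1 -> 0 < t ->
  (forall z : C,
     (Cmod z < 1 /\ hilbert z0 z = t) <-> circle_eq z0 (exp t) z = RtoC 0) /\
  is_ellipse (fun z => circle_eq z0 (exp t) z = RtoC 0) /\
  (forall z : C, circle_eq z0 (exp t) z = RtoC 0 -> Cmod z < 1).
Proof.
  intros Hz0 Ht. destruct z0 as [p q]. rewrite Cmod_lt1 in Hz0.
  assert (Hr : 1 < exp t) by (rewrite <- exp_0; apply exp_increasing; lra).
  assert (Hin : forall z : C, circle_eq (p,q) (exp t) z = RtoC 0 -> Cmod z < 1).
  { intros [x y]. rewrite circle_eq_Kl, ceq0, Cmod_lt1. apply Kl_in; assumption. }
  split; [|split; [|exact Hin]].
  - intros [x y]. split.
    + intros [Hz Hh]. rewrite Cmod_lt1 in Hz. rewrite circle_eq_Kl, ceq0.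
      apply (hilbert_iff p q x y t Hz0 Hz Ht). exact Hh.
    + intro H. pose proof (Hin _ H) as Hz. split; [exact Hz|].
      rewrite Cmod_lt1 in Hz. rewrite circle_eq_Kl, ceq0 in H.
      apply (hilbert_iff p q x y t Hz0 Hz Ht). exact H.
  - destruct (ellipse_main p q (exp t) Hz0 Hr) as [f1 [f2 [a [H1 H2]]]].
    exists f1, f2, a. split; [exact H1|].
    intros [x y]. rewrite circle_eq_Kl, ceq0. apply (H2 (x,y)).
Qed.
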